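(* Let $\kappa>1$. For every $n$ that is a power of $2$, $\tau_{2n}\le\tau_n^2$.
   Context: Fix $\kappa>1$. Define sequences indexed by powers of two: $z_1=1/\kappa$ and, for each power of two $n\ge1$, $z_{2n}=z_n\bigl(\xi+\sqrt{1+\xi^2}\bigr)$ with $\xi=1-z_n$. The Silver Convergence Rate is $\tau_n=\left(\frac{1-z_n}{1+z_n}\right)^2$. *)

(* Defs.v *)
From Stdlib Require Import Reals.
Open Scope R_scope.

(* silver_z kappa k = z_{2^k}: the sequence z_n indexed by powers of two n = 2^k. *)
Fixpoint silver_z (kappa : R) (k : nat) : R :=
  match k with
  | O => 1 / kappa
  | S k' => let zn := silver_z kappa k' in
            let xi := 1 - zn in
            zn * (xi + sqrt (1 + xi ^ 2))
  end.

Definition silver_tau (kappa : R) (k : nat) : R :=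
  ((1 - silver_z kappa k) / (1 + silver_z kappa k)) ^ 2.

(* Main.v *)
Require Import Defs.
From Stdlib Require Import Reals Lra Psatz.
Open Scope R_scope.

Lemma step_bounds (z : R) : 0 < z <= 1 ->
  let s := sqrt (1 + (1 - z) ^ 2) in
  z <= z * ((1 - z) + s) <= 1 /\ 2 * z / (1 + z ^ 2) <= z * ((1 - z) + s).
Proof.
  intros [h0 h1] s.
  assert (hs0 : 0 <= s) by apply sqrt_pos.
  assert (hs2 : s * s = 1 + (1 - z) ^ 2) by (apply sqrt_sqrt; nra).
  assert (hs1 : 1 <= s) by nra.
  split; [split|].
  - nra.
  -
    assert (z * s <= 1 - z * (1 - z)); [|nra].
    assert (0 <= 1 - z * (1 - z)) by nra.
    assert ((z*s)^2 <= (1 - z*(1-z))^2) by nra.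
    nra.
  - assert (hp : 0 < 1 + z ^ 2) by nra.
    apply (Rmult_le_reg_r (1 + z^2)); [lra|].
    unfold Rdiv; rewrite Rmult_assoc, Rinv_l by lra; rewrite Rmult_1_r.
    assert (2 <= ((1 - z) + s) * (1 + z ^ 2)); [|nra].
    assert (s * (1 + z^2) >= 2 - (1 - z) * (1 + z^2)); [|nra].
    destruct (Rle_or_lt (2 - (1 - z) * (1 + z^2)) 0). { assert (0 <= s * (1+z^2)) by (apply Rmult_le_pos; nra). lra. }
    assert ((s * (1 + z^2))^2 >= (2 - (1 - z) * (1 + z^2))^2).
    { replace ((s * (1 + z^2))^2) with ((s*s) * (1+z^2)^2) by ring.
      rewrite hs2. assert (0 <= ((z-1)^2)^2) by apply pow2_ge_0. replace ((1 + (1 - z) ^ 2) * (1 + z ^ 2) ^ 2) with ((2 - (1 - z) * (1 + z^2))^2 + ((z-1)^2)^2) by ring. lra. }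
    nra.
Qed.

Lemma z_bounds (kappa : R) (hk : 1 < kappa) (k : nat) :
  0 < silver_z kappa k <= 1.
Proof.
  induction k as [|k IH]; cbn [silver_z].
  - split. apply Rdiv_lt_0_compat; lra.
    unfold Rdiv; rewrite Rmult_1_l. apply Rlt_le. rewrite <- Rinv_1. apply Rinv_lt_contravar; lra.
  - destruct (step_bounds _ IH) as [[a b] _]. lra.
Qed.

Theorem mainTheorem8 (kappa : R) (hk : 1 < kappa) (k : nat) :
  silver_tau kappa (S k) <= (silver_tau kappa k) ^ 2.
Proof.
  unfold silver_tau. cbn [silver_z].
  pose proof (z_bounds kappa hk k) as Hz.
  set (z := silver_z kappa k) in *.
  destruct (step_bounds z Hz) as [[a b] c].
  set (z' := z * (1 - z + sqrt (1 + (1 - z) ^ 2))) in *.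
  set (w := 2 * z / (1 + z ^ 2)) in *.
  assert (hq : ((1 - z) / (1 + z)) ^ 2 = (1 - w) / (1 + w)).
  { unfold w. field. split; nra. }
  assert (hw0 : 0 <= w) by (unfold w; apply Rmult_le_pos; [lra| apply Rlt_le, Rinv_0_lt_compat; nra]).
  assert (hmono : (1 - z') / (1 + z') <= (1 - w) / (1 + w)).
  { apply (Rmult_le_reg_r ((1+z')*(1+w))); [nra|].
    replace ((1 - z') / (1 + z') * ((1 + z') * (1 + w))) with ((1-z')*(1+w)) by (field; lra).
    replace ((1 - w) / (1 + w) * ((1 + z') * (1 + w))) with ((1-w)*(1+z')) by (field; lra).
    nra. }
  assert (h0 : 0 <= (1 - z') / (1 + z')) by (apply Rmult_le_pos; [lra| apply Rlt_le, Rinv_0_lt_compat; lra]).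
  replace ((((1 - z) / (1 + z)) ^ 2) ^ 2) with ((((1 - z) / (1 + z)) ^ 2) ^ 2) by reflexivity.
  rewrite hq. apply pow_incr. fold z z'. lra.
Qed.
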